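(* Let $E\subset\partial\mathbb{D}$ be closed and suppose $E$ contains no pair of antipodal points (no $\zeta$ with $\zeta,-\zeta\in E$). Then there is $\alpha\in[0,2\pi)$ such that $\{-ie^{i\alpha},\ e^{i\alpha},\ ie^{i\alpha}\}\subset\partial\mathbb{D}\setminus E$.
   Context: $\partial\mathbb{D}$ is the unit circle in $\mathbb{C}$. *)

(* Defs.v *)
From Stdlib Require Import Reals.
From Coquelicot Require Import Coquelicot.
Open Scope R_scope.

Definition expi (a : R) : C := (cos a, sin a).

Definition unit_circle (z : C) : Prop := Cmod z = 1.

(* Main.v *)
Require Import Defs.
From Stdlib Require Import Reals Lra Classical.
From Coquelicot Require Import Coquelicot.
Open Scope R_scope.

Lemma expi_PI x : Copp (expi x) = expi (x + PI).
Proof. unfold expi, Copp; simpl. rewrite neg_cos, neg_sin. reflexivity. Qed.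

Lemma expi_2PI x : expi (x + 2*PI) = expi x.
Proof. unfold expi. replace (x + 2*PI) with ((x+PI)+PI) by ring.
  rewrite !neg_cos, !neg_sin. f_equal; ring. Qed.

Lemma expi_Ci x : Cmult Ci (expi x) = expi (x + PI/2).
Proof. unfold expi, Cmult, Ci; simpl. rewrite cos_plus, sin_plus, cos_PI2, sin_PI2.
  f_equal; ring. Qed.

Lemma expi_mCi x : Cmult (Copp Ci) (expi x) = expi (x - PI/2).
Proof. unfold expi, Cmult, Ci, Copp; simpl. rewrite cos_minus, sin_minus, cos_PI2, sin_PI2.
  f_equal; ring. Qed.

Lemma expi_unit x : unit_circle (expi x).
Proof. unfold unit_circle, expi, Cmod; simpl.
  transitivity (sqrt 1); [f_equal | apply sqrt_1].
  pose proof (sin2_cos2 x) as H. unfold Rsqr in H. nra. Qed.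

Lemma loc_expi (E : C -> Prop) s : closed E -> ~ E (expi s) ->
  exists d, 0 < d /\ forall t, Rabs (t - s) < d -> ~ E (expi t).
Proof.
  intros HE Hn.
  assert (Hl : locally (expi s) (fun z => ~ E z)).
  { apply NNPP. intro H. apply Hn. apply HE. exact H. }
  destruct Hl as [eps Heps].
  assert (Hc := continuous_cos s (ball (cos s) eps) (locally_ball _ _)).
  assert (Hs := continuous_sin s (ball (sin s) eps) (locally_ball _ _)).
  unfold filtermap in Hc, Hs.
  destruct (filter_and _ _ Hc Hs) as [d Hd].
  exists d. split. apply cond_pos. intros t Ht.
  apply Heps. destruct (Hd t) as [H1 H2]. exact Ht. split; assumption.
Qed.

Lemma conn (P Q : R -> Prop) (a b : R) : a <= b ->
  (forall s, ~ P s -> exists d, 0 < d /\ forall t, Rabs (t - s) < d -> ~ P t) ->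
  (forall s, ~ Q s -> exists d, 0 < d /\ forall t, Rabs (t - s) < d -> ~ Q t) ->
  (forall t, a <= t <= b -> P t \/ Q t) ->
  (forall t, ~ (P t /\ Q t)) -> P a -> ~ P b -> False.
Proof.
  intros Hab HP HQ Hcov Hdis Pa Pb.
  set (S := fun t => a <= t <= b /\ forall u, a <= u <= t -> P u).
  assert (Sb : bound S). { exists b. intros t [Ht _]. lra. }
  assert (Sa : exists x, S x).
  { exists a. split. lra. intros u Hu. replace u with a by lra. exact Pa. }
  destruct (completeness S Sb Sa) as [m [Hub Hlub]].
  assert (Hm1 : a <= m). { apply Hub. destruct Sa as [x Hx]. unfold S. split. lra.
    intros u Hu. replace u with a by lra. exact Pa. }
  assert (Hm2 : m <= b). { apply Hlub. intros t [Ht _]. lra. }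
  assert (Hnub : forall y, y < m -> exists t, S t /\ y < t).
  { intros y Hy. apply NNPP. intro Hn. assert (m <= y). { apply Hlub. intros t St.
      destruct (Rle_dec t y) as [|Hn2]. assumption. exfalso. apply Hn. exists t. split; [assumption|lra]. }
    lra. }
  assert (Hbelow : forall u, a <= u < m -> P u).
  { intros u Hu. destruct (Hnub u) as [t [[Ht1 Ht2] Hut]]; [lra|]. apply Ht2. lra. }
  assert (Pm : P m).
  { apply NNPP. intro Hn. destruct (HP m Hn) as [d [Hd Hd']].
    destruct (Hnub (m - d/2)) as [t [[Ht1 Ht2] Hut]]; [lra|].
    assert (t <= m) by (apply Hub; split; assumption).
    apply (Hd' t). apply Rabs_def1; lra. apply Ht2. lra. }
  assert (Qm : ~ Q m) by (intro; apply (Hdis m); split; assumption).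
  destruct (HQ m Qm) as [d [Hd Hd']].
  assert (Hmb : m < b). { destruct (Req_dec m b). subst. contradiction. lra. }
  set (t' := Rmin (m + d/2) b).
  assert (t' <= m).
  { apply Hub. unfold t'. split. split. apply Rmin_case; lra. apply Rmin_r.
    intros u Hu. destruct (Rlt_dec u m). apply Hbelow; lra.
    assert (u <= m + d/2) by (pose proof (Rmin_l (m + d/2) b); lra).
    assert (u <= b) by (pose proof (Rmin_r (m + d/2) b); lra).
    destruct (Hcov u) as [|HQu]. lra. assumption.
    exfalso. apply (Hd' u). apply Rabs_def1; lra. exact HQu. }
  unfold t' in H. revert H. apply Rmin_case_strong; intros; lra.
Qed.

Theorem lemma1 (E : C -> Prop)
  (HEsub : forall z, E z -> unit_circle z)
  (HEclosed : closed E)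
  (Hanti : forall z : C, ~ (E z /\ E (Copp z))) :
  exists alpha : R, 0 <= alpha < 2 * PI /\
    (unit_circle (Cmult (Copp Ci) (expi alpha)) /\ ~ E (Cmult (Copp Ci) (expi alpha))) /\
    (unit_circle (expi alpha) /\ ~ E (expi alpha)) /\
    (unit_circle (Cmult Ci (expi alpha)) /\ ~ E (Cmult Ci (expi alpha))).
Proof.
  pose proof PI_RGT_0 as HPI.
  assert (fin : forall alpha, 0 <= alpha < 2*PI -> ~ E (expi (alpha - PI/2)) ->
    ~ E (expi alpha) -> ~ E (expi (alpha + PI/2)) ->
    exists alpha : R, 0 <= alpha < 2 * PI /\
    (unit_circle (Cmult (Copp Ci) (expi alpha)) /\ ~ E (Cmult (Copp Ci) (expi alpha))) /\
    (unit_circle (expi alpha) /\ ~ E (expi alpha)) /\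
    (unit_circle (Cmult Ci (expi alpha)) /\ ~ E (Cmult Ci (expi alpha)))).
  { intros alpha Ha H1 H2 H3. exists alpha. rewrite expi_mCi, expi_Ci.
    split. exact Ha. split. split. apply expi_unit. exact H1.
    split; split; try apply expi_unit; assumption. }
  assert (Hdis : forall t, ~ (E (expi t) /\ E (expi (t + PI)))).
  { intros t H. apply (Hanti (expi t)). rewrite expi_PI. exact H. }
  assert (HP : forall s, ~ E (expi s) -> exists d, 0 < d /\ forall t, Rabs (t - s) < d -> ~ E (expi t)).
  { intros s. apply loc_expi. exact HEclosed. }
  assert (HQ : forall s, ~ E (expi (s + PI)) -> exists d, 0 < d /\ forall t, Rabs (t - s) < d -> ~ E (expi (t + PI))).
  { intros s Hs. destruct (HP _ Hs) as [d [Hd Hd']]. exists d. split. exact Hd.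
    intros t Ht. apply Hd'. replace (t + PI - (s + PI)) with (t - s) by ring. exact Ht. }
  assert (Hth : exists th, 0 <= th <= PI /\ ~ E (expi th) /\ ~ E (expi (th + PI))).
  { apply NNPP. intro Hn.
    assert (Hcov : forall t, 0 <= t <= PI -> E (expi t) \/ E (expi (t + PI))).
    { intros t Ht. apply NNPP. intro H. apply Hn. exists t. split. exact Ht.
      split; intro; apply H; [left|right]; assumption. }
    destruct (Hcov 0) as [H0|H0]. lra.
    - apply (conn (fun t => E (expi t)) (fun t => E (expi (t + PI))) 0 PI); try assumption.
      lra. intro HPI'. apply (Hdis 0). split. exact H0. rewrite Rplus_0_l. exact HPI'.
    - apply (conn (fun t => E (expi (t + PI))) (fun t => E (expi t)) 0 PI); try assumption.
      lra. intros t Ht. destruct (Hcov t Ht); [right|left]; assumption.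
      intros t [H1 H2]. apply (Hdis t). split; assumption.
      intro HPI'. apply (Hdis 0). split; [|exact H0].
      rewrite <- (expi_2PI 0). replace (0 + 2*PI) with (PI + PI) by ring. exact HPI'. }
  destruct Hth as [th [Hth [H1 H2]]].
  destruct (classic (E (expi (th + PI/2)))) as [HE|HE].
  - assert (HE' : ~ E (expi (th + PI/2 + PI))).
    { intro H. apply (Hdis (th + PI/2)). split; assumption. }
    destruct (Rlt_dec th (PI/2)).
    + apply (fin (th + 3*(PI/2))). lra.
      * replace (th + 3*(PI/2) - PI/2) with (th + PI) by field. exact H2.
      * replace (th + 3*(PI/2)) with (th + PI/2 + PI) by field. exact HE'.
      * replace (th + 3*(PI/2) + PI/2) with (th + 2*PI) by field. rewrite expi_2PI. exact H1.
    + apply (fin (th - PI/2)). lra.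
      * rewrite <- expi_2PI. replace (th - PI/2 - PI/2 + 2*PI) with (th + PI) by field. exact H2.
      * rewrite <- expi_2PI. replace (th - PI/2 + 2*PI) with (th + PI/2 + PI) by field. exact HE'.
      * replace (th - PI/2 + PI/2) with th by field. exact H1.
  - apply (fin (th + PI/2)). lra.
    * replace (th + PI/2 - PI/2) with th by field. exact H1.
    * exact HE.
    * replace (th + PI/2 + PI/2) with (th + PI) by field. exact H2.
Qed.
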